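(* Let $A=(a_{ij})$ be an $(n-2)\times n$ integer matrix of rank $n-2$ with columns $a_1,\dots,a_n$ such that some $w\in\mathbb Q^{n-2}$ satisfies $w\cdot a_i=1$ for all $i$, and let $B=(b_{i\ell})$ be an $n\times 2$ integer matrix whose columns form a $\mathbb Z$-basis of $\ker_{\mathbb Z}(A)$. Let $d_B$ be the degree of the toric variety $X=X_B\subset\mathbf P^{n-1}$, $\tilde{\mathcal C}_B$ its dual Chow form and $E_A$ its full discriminant. Then, up to a nonzero constant factor, $$E_A(x_1,\dots,x_n)=(x_1\cdots x_n)^{d_B}\cdot\tilde{\mathcal C}_B\bigl(b_{i\ell}/x_i,\ i=1,\dots,n,\ \ell=1,2\bigr),$$ i.e. $\tilde{\mathcal C}_B$ is evaluated at $y_{i\ell}=b_{i\ell}/x_i$.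
   Context: $X=X_B\subset\mathbf P^{n-1}$ is the (codimension 2) subvariety defined by the toric ideal $I_B\subset k[x_1,\dots,x_n]$ ($k$ of characteristic zero) generated by all binomials $x^{u_+}-x^{u_-}$ with $u=u_+-u_-\in\ker_{\mathbb Z}(A)$; $d_B$ is its degree. With $Y=(y_{i\ell})$ an $n\times2$ matrix of indeterminates, the dual Chow form $\tilde{\mathcal C}_B\in\mathbb Z[y_{i\ell}]$ is the irreducible polynomial (unique up to sign) vanishing exactly when the line $\{(y_{11}+ty_{12}:\cdots:y_{n1}+ty_{n2})\}$ meets $X$; it can be written as a polynomial of degree $d_B$ in the brackets $[\,i\,j\,]=y_{i1}y_{j2}-y_{i2}y_{j1}$. Let $Z=(z_{ij})$ be an $(n-2)\times n$ matrix of indeterminates; for $i<j$ let $Z\langle i,j\rangle$ (resp. $A\langle i,j\rangle$) be the submatrix omitting columns $i,j$ and $B(i,j)$ the submatrix of $B$ of rows $i,j$. The primal Plücker coordinates are $\langle i\,j\rangle=\varepsilon_{ij}\det Z\langle i,j\rangle$, with fixed signs $\varepsilon_{ij}\in\{\pm1\}$ such that $\varepsilon_{ij}\det A\langle i,j\rangle=c\,\det B(i,j)$ for all $i<j$ for some constant $c\neq0$ (the paper fixes this normalization only up to such a global constant). The primal Chow form $\mathcal C_A$ is obtained from $\tilde{\mathcal C}_B$, written in brackets, by replacing each $[\,i\,j\,]$ by $\langle i\,j\rangle$. The full discriminant $E_A$ is the image of $\mathcal C_A$ under $z_{ij}\mapsto a_{ij}x_j$. *)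

(* Defs.v *)
From HB Require Import structures.
From mathcomp Require Import all_boot all_order all_algebra all_field.
From mathcomp Require Import mpoly.

Set Implicit Arguments.
Unset Strict Implicit.
Unset Printing Implicit Defensive.

Import Order.TTheory GRing.Theory Num.Theory.
Local Open Scope ring_scope.

(* Conventions.  Indices are 0-based: 'I_n = {0..n-1},  *)
(* the two columns of Y and B are indexed by 'I_2 = {0,1}.            *)
(* Polynomials in the entries of an (p x q) matrix of indeterminates   *)
(* live in {mpoly R[p*q]}, the variable of entry (i,l) being           *)
(* 'X_(mxvec_index i l).  A substitution of the entries by the entries *)
(* of a matrix M is [mmap f (fun v => mxvec M 0 v)].                  *)

Definition col0 : 'I_2 := ord0.
Definition col1 : 'I_2 := ord_max.

Definition zpos (z : int) : nat := `|Num.max z 0|%N.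
Definition zneg (z : int) : nat := `|Num.max (- z) 0|%N.

Definition in_kerZ (m n : nat) (A : 'M[int]_(m, n)) (u : 'cV[int]_n) : Prop :=
  A *m u = 0.

Definition kerZ_basis (m n : nat) (A : 'M[int]_(m, n)) (B : 'M[int]_(n, 2)) : Prop :=
  [/\ A *m B = 0,
      (forall u : 'cV[int]_n, in_kerZ A u -> exists c : 'cV[int]_2, u = B *m c)
    & (forall c : 'cV[int]_2, B *m c = 0 -> c = 0)].

(* A point of P^{n-1}(algC), given by homogeneous coordinates p, lies on   *)
(* X = X_B = V(I_B): p is nonzero and every generating binomial            *)
(* x^{u+} - x^{u-}, u in ker_Z(A), of the toric ideal I_B vanishes at p.  *)
Definition on_toric (m n : nat) (A : 'M[int]_(m, n)) (p : 'I_n -> algC) : Prop :=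
  (exists i, p i != 0) /\
  forall u : 'cV[int]_n, in_kerZ A u ->
    \prod_(i < n) p i ^+ zpos (u i 0) - \prod_(i < n) p i ^+ zneg (u i 0) = 0.

Definition yvar (n : nat) (i : 'I_n) (l : 'I_2) : {mpoly int[n * 2]} :=
  'X_(mxvec_index i l).

Definition dbracket (n : nat) (i j : 'I_n) : {mpoly int[n * 2]} :=
  yvar i col0 * yvar j col1 - yvar i col1 * yvar j col0.

Definition bracket_at (n : nat) (Y : 'M[algC]_(n, 2)) (i j : 'I_n) : algC :=
  Y i col0 * Y j col1 - Y i col1 * Y j col0.

Definition eval_mx (p q : nat) (P : {mpoly int[p * q]}) (M : 'M[algC]_(p, q)) : algC :=
  mmap (fun c : int => c%:~R) (fun v => mxvec M 0 v) P.

Definition eval_vec (n : nat) (P : {mpoly int[n]}) (x : 'I_n -> algC) : algC :=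
  mmap (fun c : int => c%:~R) x P.

Definition irreducible_mpoly (k : nat) (p : {mpoly int[k]}) : Prop :=
  [/\ p != 0, ~~ (p \is a GRing.unit) &
      forall q r : {mpoly int[k]}, p = q * r ->
        (q \is a GRing.unit) \/ (r \is a GRing.unit)].

(* C is a dual Chow form of X_B: an irreducible polynomial in Z[y_{il}]    *)
(* vanishing at a matrix Y of rank 2 exactly when the projective line     *)
(* {s*Y_1 + t*Y_2 : (s:t) in P^1} spanned by the columns meets X.         *)
Definition is_dual_chow_form (m n : nat) (A : 'M[int]_(m, n))
    (C : {mpoly int[n * 2]}) : Prop :=
  irreducible_mpoly C /\
  forall Y : 'M[algC]_(n, 2),
    (exists i j, bracket_at Y i j != 0) ->
    (eval_mx C Y = 0 <->
       exists s t : algC, (s != 0 \/ t != 0) /\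
         on_toric A (fun i => s * Y i col0 + t * Y i col1)).

(* P (in bracket variables [i j], variable of [i j] = 'X_(mxvec_index i j)) *)
(* represents C: C = P([i j]).                                             *)
Definition bracket_subst (n : nat) (P : {mpoly int[n * n]}) : {mpoly int[n * 2]} :=
  mmap (fun c : int => c%:MP) (fun v => mxvec (\matrix_(i < n, j < n) dbracket i j) 0 v) P.

Definition omit2 (n : nat) (i j : 'I_n) (k : 'I_(n - 2)) : 'I_n :=
  nth i [seq x <- enum 'I_n | (x != i) && (x != j)] k.

Definition mx_omit2 (R : Type) (n : nat) (M : 'M[R]_(n - 2, n)) (i j : 'I_n)
  : 'M[R]_(n - 2) := colsub (omit2 i j) M.

Definition mx_rows2 (R : Type) (n : nat) (M : 'M[R]_(n, 2)) (i j : 'I_n) : 'M[R]_2 :=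
  \matrix_(r < 2, l < 2) M (if r == col0 then i else j) l.

Definition Zmat (n : nat) : 'M[{mpoly int[(n - 2) * n]}]_(n - 2, n) :=
  \matrix_(k < n - 2, j < n) 'X_(mxvec_index k j).

(* primal Plücker coordinates <i j> = eps_ij det Z<i,j> (i < j), extended *)
(* antisymmetrically to all ordered pairs (as the brackets are).           *)
Definition pbracket (n : nat) (eps : 'I_n -> 'I_n -> int) (i j : 'I_n)
  : {mpoly int[(n - 2) * n]} :=
  if (i < j)%N then \det (mx_omit2 (Zmat n) i j) *~ eps i j
  else if (j < i)%N then - (\det (mx_omit2 (Zmat n) j i) *~ eps j i)
  else 0.

Definition primal_chow (n : nat) (eps : 'I_n -> 'I_n -> int) (P : {mpoly int[n * n]})
  : {mpoly int[(n - 2) * n]} :=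
  mmap (fun c : int => c%:MP)
       (fun v => mxvec (\matrix_(i < n, j < n) pbracket eps i j) 0 v) P.

Definition full_discriminant (n : nat) (A : 'M[int]_(n - 2, n))
    (eps : 'I_n -> 'I_n -> int) (P : {mpoly int[n * n]}) : {mpoly int[n]} :=
  mmap (fun c : int => c%:MP)
       (fun v => mxvec (\matrix_(k < n - 2, j < n) ((A k j)%:MP * 'X_j)) 0 v)
       (primal_chow eps P).

(* Main.v *)
Require Import Defs.
From HB Require Import structures.
From mathcomp Require Import all_boot all_order all_algebra all_field.
From mathcomp Require Import mpoly.
From mathcomp Require Import ring.
Import Order.TTheory GRing.Theory Num.Theory.
Local Open Scope ring_scope.
Lemma mmap_homog (k d: nat) (S : comRingType) (f : {rmorphism int -> S}) (g : 'I_k -> S) (lam : S) (p : {mpoly int[k]}) :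
  p \is d.-homog -> mmap f (fun v => lam * g v) p = lam ^+ d * mmap f g p.
Proof.
move=> /dhomogP hp; rewrite /mmap mulr_sumr big_seq [RHS]big_seq.
apply: eq_bigr => m hm; rewrite /mmap1.
under eq_bigr do rewrite exprMn.
rewrite big_split /= -(hp m hm) prodrXr -mdegE mulrCA.
by [].
Qed.

Lemma mmap_comp (k l: nat) (S: comRingType) (f : {rmorphism int -> S}) (g : 'I_l -> S)
  (h : 'I_k -> {mpoly int[l]}) (p : {mpoly int[k]}) :
  mmap f g (mmap (fun c : int => c%:MP) h p) = mmap f (fun v => mmap f g (h v)) p.
Proof.
have -> : mmap (fun c : int => c%:MP) h p
   = \sum_(m <- msupp p) (p@_m)%:MP * mmap1 h m by [].
rewrite raddf_sum /=; apply: eq_bigr => m _.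
rewrite rmorphM /= mmapC; congr (_ * _).
rewrite /mmap1 rmorph_prod; apply: eq_bigr => i _; by rewrite rmorphXn.
Qed.
Lemma eq_mmap (k : nat) (S : comRingType) (f : int -> S) (g1 g2 : 'I_k -> S) p :
  g1 =1 g2 -> mmap f g1 p = mmap f g2 p.
Proof. by move=> e; apply: eq_bigr => m _; rewrite (mmap1_eq _ e). Qed.

Lemma mmapXi (k : nat) (S : comRingType) (f : {rmorphism int -> S}) (g : 'I_k -> S) i :
  mmap f g 'X_i = g i.
Proof. by rewrite mmapX mmap1U. Qed.
Lemma det2 (R : comRingType) (M : 'M[R]_2) : \det M = M 0 0 * M 1 1 - M 0 1 * M 1 0.
Proof.
rewrite (expand_det_row _ 0) !big_ord_recl big_ord0 /cofactor !det_mx11 !mxE /=.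
have e1 : lift (0 : 'I_2) (0 : 'I_1) = 1 by apply/val_inj.
have e2 : lift (ord0 : 'I_2) (0 : 'I_1) = 1 by apply/val_inj.
have e3 : lift (ord0 : 'I_2) (ord0 : 'I_1) = 1 by apply/val_inj.
have e4 : lift (lift (ord0 : 'I_2) (ord0 : 'I_1)) (0 : 'I_1) = 0 by apply/val_inj.
have e5 : (ord0 : 'I_2) = 0 by apply/val_inj.
have e6 : lift (1 : 'I_2) (0 : 'I_1) = 0 by apply/val_inj.
rewrite ?e1 ?e2 ?e4 ?e3 ?e5 /= ?expr0 ?expr1 ?addr0 e6; ring.
Qed.
Lemma prod_omit2 (n : nat) (S : comRingType) (x : 'I_n -> S) (i j : 'I_n) : i != j ->
  (\prod_(k < n - 2) x (omit2 i j k)) * x i * x j = \prod_(k < n) x k.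
Proof.
move=> hij.
pose P := [pred y : 'I_n | (y != i) && (y != j)].
have hbig : forall F : 'I_n -> S, \prod_(y <- enum 'I_n | P y) F y = \prod_(y | P y) F y.
  by move=> F; rewrite big_enum_cond.
have hs : size [seq y <- enum 'I_n | (y != i) && (y != j)] = (n - 2)%N.
  rewrite size_filter -sum1_count.
  rewrite big_enum_cond /= sum1_card.
  have e1 := cardD1 i 'I_n.
  have e2 := cardD1 j [predD1 'I_n & i].
  rewrite card_ord inE in e1. rewrite !inE eq_sym hij /= in e2.
  have -> : #|(fun y : 'I_n => (y != i) && (y != j))| = #|[predD1 [predD1 'I_n & i] & j]|.
    apply: eq_card => y; rewrite !inE andbT; exact: andbC.
  rewrite e2 in e1; rewrite [in RHS]e1 /= add1n add1n subSS subSS subn0. by [].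
rewrite /omit2.
set s := [seq y <- enum 'I_n | (y != i) && (y != j)].
have -> : \prod_(k < n - 2) x (nth i s k) = \prod_(y <- s) x y.
  by rewrite (big_nth i) hs big_mkord.
rewrite big_filter hbig [RHS](bigD1 i) // [in RHS](bigD1 j) /=; last by rewrite eq_sym hij.
set Q := \prod_(y < n | (y != i) && (y != j)) x y.

ring.
Qed.

Lemma det_part (n : nat) (A : 'M[int]_(n - 2, n)) (x : 'I_n -> algC) (i j : 'I_n) :
  mmap (fun c : int => c%:~R) (fun w => mxvec (\matrix_(k < n - 2, l < n) ((A k l)%:~R * x l)) 0 w)
    (\det (mx_omit2 (Zmat n) i j))
  = (\det (mx_omit2 A i j))%:~R * \prod_(k < n - 2) x (omit2 i j k).
Proof.
rewrite -det_map_mx.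
have -> : map_mx (mmap (fun c : int => c%:~R)
     (fun w => mxvec (\matrix_(k < n - 2, l < n) ((A k l)%:~R * x l)) 0 w))
     (mx_omit2 (Zmat n) i j)
   = map_mx (fun c : int => c%:~R : algC) (mx_omit2 A i j) *m diag_mx (\row_k x (omit2 i j k)).
  apply/matrixP => a b; rewrite mul_mx_diag /mx_omit2 /Zmat !mxE mmapXi mxvecE !mxE.
  by [].
by rewrite det_mulmx det_diag det_map_mx; congr (_ * _); apply: eq_bigr => k _; rewrite mxE.
Qed.

Theorem proposition3p2 (n : nat) (A : 'M[int]_(n - 2, n)) (B : 'M[int]_(n, 2))
  (hrank : \rank (map_mx (fun z : int => z%:~R : rat) A) = (n - 2)%N)
  (hw : exists w : 'rV[rat]_(n - 2),
          w *m map_mx (fun z : int => z%:~R : rat) A = const_mx 1)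
  (hB : kerZ_basis A B)
  (Ct : {mpoly int[n * 2]}) (hC : is_dual_chow_form A Ct)
  (dB : nat) (P : {mpoly int[n * n]}) (hP : P \is dB.-homog)
  (hPC : Ct = bracket_subst P)
  (eps : 'I_n -> 'I_n -> int)
  (heps : forall i j : 'I_n, (i < j)%N -> eps i j = 1 \/ eps i j = -1)
  (hc : exists c : rat, c != 0 /\
          forall i j : 'I_n, (i < j)%N ->
            (eps i j)%:~R * (\det (mx_omit2 A i j))%:~R
              = c * (\det (mx_rows2 B i j))%:~R) :
  exists c : rat, c != 0 /\
    forall x : 'I_n -> algC, (forall i, x i != 0) ->
      eval_vec (full_discriminant A eps P) x
        = ratr c * (\prod_(i < n) x i) ^+ dB
          * eval_mx Ct (\matrix_(i < n, l < 2) ((B i l)%:~R / x i)).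
Proof.
case: hc => c [c0 hc].
exists (c ^+ dB); split; first exact: expf_neq0.
move=> x hx.
rewrite /eval_vec /full_discriminant /primal_chow hPC /eval_mx /bracket_subst !mmap_comp.
rewrite rmorphXn -exprMn -mmap_homog //.
apply: eq_mmap => v; case/mxvec_indexP: v => i j; rewrite !mxvecE !mxE.
set X := \prod_(i0 < n) x i0.
set Yb := \matrix_(i0 < n, l < 2) ((B i0 l)%:~R / x i0 : algC).
have hY : forall a b : 'I_n, mmap (fun c : int => c%:~R) (mxvec Yb 0) (dbracket a b) = bracket_at Yb a b.
  by move=> a b; rewrite /dbracket /yvar rmorphB !rmorphM /= !mmapXi !mxvecE.
rewrite hY.
rewrite (@eq_mmap _ _ _ _ (fun w => mxvec (\matrix_(k < n - 2, l < n) ((A k l)%:~R * x l)) 0 w)); last first.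
  by case/mxvec_indexP => k l; rewrite !mxvecE !mxE rmorphM /= mmapC mmapXi.
have entry : forall a b : 'I_n, (a < b)%N ->
   mmap (fun c : int => c%:~R) (fun w => mxvec (\matrix_(k < n - 2, l < n) ((A k l)%:~R * x l)) 0 w)
     (\det (mx_omit2 (Zmat n) a b) *~ eps a b) = ratr c * X * bracket_at Yb a b.
  move=> a b hab.
  have nab : a != b by rewrite -val_eqE /= ltn_eqF.
  rewrite raddfMz /= det_part -mulrzr /X -(@prod_omit2 _ _ x _ _ nab).
  have := congr1 (fun r : rat => ratr r : algC) (hc a b hab).
  rewrite /= rmorphM /= !ratr_int rmorphM /= ratr_int det2 /mx_rows2 !mxE /= => h.
  rewrite [LHS](_ : _ = ((eps a b)%:~R * (\det (mx_omit2 A a b))%:~R) * \prod_(k < n - 2) x (omit2 a b k)); last by ring.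
  rewrite h /bracket_at /Yb !mxE rmorphB !rmorphM /=.
  have hxa := hx a; have hxb := hx b.
  rewrite (_ : Defs.col0 = 0 :> 'I_2); last by apply/val_inj.
  rewrite (_ : Defs.col1 = 1 :> 'I_2); last by apply/val_inj.
  field.
  by rewrite hxa hxb.
rewrite /pbracket; case: ltngtP => hij.
- exact: entry.
- rewrite raddfN /= entry //; rewrite /bracket_at; ring.
- have eij : i = j by apply/val_inj.
  rewrite -eij raddf0 /bracket_at; ring.
Qed.
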